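(* Let $T=\begin{pmatrix}1&1\\0&1\end{pmatrix}\in\mathsf{SL}(2,\mathbb{Z})$. For every integer $k\ge1$, $T^{12k}=\begin{pmatrix}1&12k\\0&1\end{pmatrix}$ can be written as a product of $k+1$ commutators of elements of $\mathsf{SL}(2,\mathbb{Z})$.
   Context: $[X,Y]=XYX^{-1}Y^{-1}$. *)

(* Defs.v *)
From HB Require Import structures.
From mathcomp Require Import all_boot all_order all_algebra.
Set Implicit Arguments. Unset Strict Implicit. Unset Printing Implicit Defensive.
Import Order.TTheory GRing.Theory Num.Theory.
Local Open Scope ring_scope.

Definition inSL2Z (A : 'M[int]_2) : Prop := \det A = 1.

Definition commSL (X Y : 'M[int]_2) : 'M[int]_2 :=
  X *m Y *m invmx X *m invmx Y.

Definition Tmat : 'M[int]_2 :=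
  \matrix_(i < 2, j < 2) (if (i <= j)%N then 1 else 0).

(* Main.v *)
Require Import Defs.
From HB Require Import structures.
From mathcomp Require Import all_boot all_order all_algebra.
From mathcomp Require Import ring zify.
From Stdlib Require Import Lia.
Import Order.TTheory GRing.Theory Num.Theory.
Local Open Scope ring_scope.

Definition mk (a b c d : int) : 'M[int]_2 :=
  \matrix_(i < 2, j < 2) (if i == 0 then (if j == 0 then a else b) else (if j == 0 then c else d)).

Lemma mk_mul a b c d a' b' c' d' :
  mk a b c d * mk a' b' c' d' = mk (a*a' + b*c') (a*b' + b*d') (c*a' + d*c') (c*b' + d*d').
Proof.
apply/matrixP => i j; rewrite !mxE !big_ord_recl big_ord0 !mxE.
case: i => [[|[|//]] ?]; case: j => [[|[|//]] ?].
all: by rewrite /= addr0.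
Qed.

Lemma mk_det a b c d : \det (mk a b c d) = a * d - b * c.
Proof.
rewrite (expand_det_row _ 0) !big_ord_recl big_ord0 /cofactor !det_mx11 !mxE /=.
rewrite addr0 expr0 mul1r /bump /= expr1 mulN1r mulrN.
by [].
Qed.

Lemma mk1 : mk 1 0 0 1 = 1.
Proof.
apply/matrixP => i j; rewrite !mxE.
by case: i => [[|[|//]] ?]; case: j => [[|[|//]] ?].
Qed.

Lemma mk_unit a b c d : a * d - b * c = 1 -> mk a b c d \is a GRing.unit.
Proof. by move=> h; rewrite unitmxE mk_det h unitr1. Qed.

Lemma mk_inv a b c d : a * d - b * c = 1 -> (mk a b c d)^-1 = mk d (-b) (-c) a.
Proof.
move=> h; have u := @mk_unit a b c d h.
have e : mk a b c d * mk d (-b) (-c) a = 1.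
  rewrite mk_mul -mk1; congr mk; try rewrite -h; ring.
by rewrite -[LHS]mulr1 -e mulrA mulVr // mul1r.
Qed.

Lemma Tmat_mk : Tmat = mk 1 1 0 1.
Proof.
apply/matrixP => i j; rewrite !mxE.
by case: i => [[|[|//]] ?]; case: j => [[|[|//]] ?].
Qed.

Lemma Tpow n : Tmat ^+ n = mk 1 n%:R 0 1.
Proof.
elim: n => [|n IH]; first by rewrite expr0 -mk1.
rewrite exprS IH Tmat_mk mk_mul; congr mk; rewrite ?natrS; ring.
Qed.

Section Gen.
Variable R : unitRingType.

Lemma conj_inv (g x : R) : g \is a GRing.unit -> x \is a GRing.unit ->
  (g * x * g^-1)^-1 = g * x^-1 * g^-1.
Proof.
move=> ug ux.
have ugx : g * x \is a GRing.unit by rewrite unitrMl.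
rewrite (invrM ugx) ?unitrV // (invrM ug ux) invrK mulrA //.
Qed.

Lemma conjX (g x : R) n : g \is a GRing.unit ->
  (g * x * g^-1) ^+ n = g * x ^+ n * g^-1.
Proof.
move=> ug; elim: n => [|n IH]; first by rewrite !expr0 mulr1 mulrV.
rewrite exprS IH !exprS !mulrA mulrVK //.
Qed.

Lemma conj_comm (g x y : R) : g \is a GRing.unit -> x \is a GRing.unit ->
  y \is a GRing.unit ->
  g * x * g^-1 * (g * y * g^-1) * (g * x * g^-1)^-1 * (g * y * g^-1)^-1 =
  g * (x * y * x^-1 * y^-1) * g^-1.
Proof.
move=> ug ux uy; rewrite !conj_inv // !mulrA !mulrVK //.
Qed.

End Gen.

Lemma commE (X Y : 'M[int]_2) : commSL X Y = X * Y * X^-1 * Y^-1.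
Proof. by []. Qed.

Lemma detJ (g x : 'M[int]_2) : g \is a GRing.unit -> \det (g * x * g^-1) = \det x.
Proof.
move=> ug; rewrite -!mulmxE !det_mulmx.
have : (g^-1 = invmx g) by [].
move=> ->; rewrite det_inv.
have ud : \det g \is a GRing.unit by rewrite -unitmxE.
by rewrite mulrC mulrA mulVr // mul1r.
Qed.

Definition Pm := mk (-1) (-5) 1 4.
Definition X0 := mk (-3) (-1) (-2) (-1).
Definition Y0 := mk (-2) 1 3 (-2).
Definition Gm := mk 1 (-2) 0 1.
Definition Bm := mk 1 1 1 2.
Definition Sm := mk 0 (-1) 1 0.
Definition Lm := mk 1 0 1 1.
Definition Ltm := mk 1 1 0 1.

Ltac mkeq := rewrite ?mk_mul; congr mk; ring.

Lemma Pm_inv : Pm^-1 = mk 4 5 (-1) (-1).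
Proof. by rewrite /Pm mk_inv //; congr mk; ring. Qed.
Lemma Pm_unit : Pm \is a GRing.unit. Proof. by apply: mk_unit. Qed.
Lemma X0_unit : X0 \is a GRing.unit. Proof. by apply: mk_unit. Qed.
Lemma Y0_unit : Y0 \is a GRing.unit. Proof. by apply: mk_unit. Qed.
Lemma Gm_unit : Gm \is a GRing.unit. Proof. by apply: mk_unit. Qed.
Lemma Bm_unit : Bm \is a GRing.unit. Proof. by apply: mk_unit. Qed.
Lemma Sm_unit : Sm \is a GRing.unit. Proof. by apply: mk_unit. Qed.
Lemma Lm_unit : Lm \is a GRing.unit. Proof. by apply: mk_unit. Qed.

Lemma c0_eq : X0 * Y0 * X0^-1 * Y0^-1 = Tmat ^+ 12 * Pm^-1.
Proof.
rewrite Tpow Pm_inv /X0 /Y0 !mk_inv //; mkeq.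
Qed.

Lemma P_eq : Gm * Bm * Gm^-1 = Pm.
Proof. rewrite /Gm mk_inv //; mkeq. Qed.

Lemma SB_eq : Sm * Bm^-1 * Sm^-1 = Bm.
Proof. rewrite /Sm /Bm !mk_inv //; mkeq. Qed.

Lemma SL_eq : Sm * Lm^-1 * Sm^-1 = Ltm.
Proof. rewrite /Sm /Lm !mk_inv //; mkeq. Qed.

Lemma LLt_eq : Lm * Ltm = Bm.
Proof. rewrite /Lm; mkeq. Qed.

Definition Zk (k : nat) : 'M[int]_2 :=
  if odd k then Bm ^+ (k./2) * Lm else Bm ^+ (k./2).

Lemma SBm_pow m : Sm * (Bm ^+ m)^-1 * Sm^-1 = Bm ^+ m.
Proof. by rewrite -exprVn -conjX ?Sm_unit // SB_eq. Qed.

Lemma Zpart k : Zk k * Sm * (Zk k)^-1 * Sm^-1 = Bm ^+ k.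
Proof.
rewrite /Zk; set m := k./2.
have hk := odd_double_half k.
case Ho: (odd k); rewrite Ho in hk.
- have e1 : Lm * Sm * Lm^-1 = Bm * Sm.
    by rewrite -LLt_eq -SL_eq !mulrA mulrVK ?Sm_unit.
  have uB : Bm ^+ m \is a GRing.unit by rewrite unitrX ?Bm_unit.
  have -> : Bm ^+ m * Lm * Sm * (Bm ^+ m * Lm)^-1 * Sm^-1 =
            Bm ^+ m * (Lm * Sm * Lm^-1) * (Bm ^+ m)^-1 * Sm^-1.
    by rewrite invrM ?Lm_unit // !mulrA.
  rewrite e1.
  have -> : Bm ^+ m * (Bm * Sm) * (Bm ^+ m)^-1 * Sm^-1 =
            Bm ^+ m * Bm * (Sm * (Bm ^+ m)^-1 * Sm^-1) by rewrite !mulrA.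
  rewrite SBm_pow -exprSr -exprD.
  congr (_ ^+ _); rewrite -hk -addnn /=; lia.
- have -> : Bm ^+ m * Sm * (Bm ^+ m)^-1 * Sm^-1 =
            Bm ^+ m * (Sm * (Bm ^+ m)^-1 * Sm^-1) by rewrite !mulrA.
  rewrite SBm_pow -exprD.
  congr (_ ^+ _); rewrite -hk -addnn /=; lia.
Qed.

Lemma telesc_gen (R : unitRingType) (t p : R) n : p \is a GRing.unit ->
  \prod_(i < n) (p ^+ i * (t * p^-1) * (p ^+ i)^-1) = t ^+ n * (p ^+ n)^-1.
Proof.
move=> up; elim: n => [|n IH]; first by rewrite big_ord0 !expr0 invr1 mulr1.
rewrite big_ord_recr /= IH !mulrA mulrVK ?unitrX //.
by rewrite [t ^+ n.+1]exprSr [p ^+ n.+1]exprSr invrM ?unitrX // !mulrA.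
Qed.

Lemma telesc n :
  \prod_(i < n) (Pm ^+ i * (Tmat ^+ 12 * Pm^-1) * (Pm ^+ i)^-1) =
  (Tmat ^+ 12) ^+ n * (Pm ^+ n)^-1.
Proof. by rewrite telesc_gen // Pm_unit. Qed.

Lemma det_pow (x : 'M[int]_2) n : \det x = 1 -> \det (x ^+ n) = 1.
Proof.
move=> h; elim: n => [|n IH]; first by rewrite expr0 det1.
by rewrite exprS -mulmxE det_mulmx h IH mulr1.
Qed.

Lemma Zk_unit k : Zk k \is a GRing.unit.
Proof.
rewrite /Zk; case: ifP => _.
  by rewrite unitrMr ?Lm_unit // unitrX ?Bm_unit.
by rewrite unitrX ?Bm_unit.
Qed.

Lemma Zk_det k : \det (Zk k) = 1.
Proof.
have hB : \det Bm = 1 by rewrite mk_det.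
rewrite /Zk; case: ifP => _; last by rewrite det_pow.
by rewrite -mulmxE det_mulmx det_pow // mk_det; ring.
Qed.

Theorem mainTheorem10 (k : nat) (hk : (1 <= k)%N) :
  Tmat ^+ (12 * k) =
    \matrix_(i < 2, j < 2)
      (if i == j then 1 else if ((i == 0 :> nat) && (j == 1 :> nat))%N then (12 * k)%:R else 0)
  /\
  exists X Y : 'I_k.+1 -> 'M[int]_2,
    (forall i, inSL2Z (X i) /\ inSL2Z (Y i)) /\
    \prod_(i < k.+1) commSL (X i) (Y i) = Tmat ^+ (12 * k).
Proof.
split.
  rewrite Tpow; apply/matrixP => i j; rewrite !mxE.
  by case: i => [[|[|//]] ?]; case: j => [[|[|//]] ?].
exists (fun i : 'I_k.+1 => if (i < k)%N then Pm ^+ i * X0 * (Pm ^+ i)^-1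
                           else Gm * Zk k * Gm^-1).
exists (fun i : 'I_k.+1 => if (i < k)%N then Pm ^+ i * Y0 * (Pm ^+ i)^-1
                           else Gm * Sm * Gm^-1).
split.
  move=> i; rewrite /inSL2Z; case: ifP => _.
    by rewrite !detJ ?unitrX ?Pm_unit // !mk_det.
  by rewrite !detJ ?Gm_unit // Zk_det mk_det.
rewrite big_ord_recr /=.
rewrite (eq_bigr (fun i : 'I_k => Pm ^+ i * (Tmat ^+ 12 * Pm^-1) * (Pm ^+ i)^-1));
  last first.
  move=> i _; rewrite /= ltn_ord commE conj_comm ?unitrX ?Pm_unit ?X0_unit ?Y0_unit //.
  by rewrite c0_eq.
rewrite telesc ltnn commE conj_comm ?Gm_unit ?Zk_unit ?Sm_unit // Zpart.
rewrite -conjX ?Gm_unit // P_eq mulrVK ?unitrX ?Pm_unit //.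
by rewrite exprM.
Qed.
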